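(* (Redeemability) In the TeeRollup protocol with the challenge mechanism described in the context, if a client submits a transaction $tx$ to the sequencers, then either $tx$ is eventually executed, or the TeeRollup smart contract (TSC) is settled, in which case the deposit of every client can be redeemed on the main chain.
   Context: TeeRollup is a rollup protocol on a main chain with finality, timestamps and smart contracts. There are $n$ sequencers, each with a TEE enclave holding a registered key pair; at most $f$ TEEs are compromised and the rest are uncompromised; any sequencer may be malicious and may crash its enclave or drop messages to/from it. Uncompromised enclaves run the fixed protocol program. Rollup states are recorded on the TSC as digests $st_h=\langle h, H(st_{h-1}), R_h, H(txs_h)\rangle$, where $R_h$ is the Merkle root of the account tree (account address, i.e. public key, and balance); data availability providers store the full account tree and can supply Merkle proofs of balances. A quorum certificate (QC) is a set of valid signatures from at least $f+1$ distinct registered sequencers' enclaves. Challenge mechanism on the TSC: while the TSC is Active, a client may call StartChallenge, posting $tx$ on-chain together with collateral; this records the start time. An enclave that receives the challenge includes $tx$ in its next batch, executes it and signs it. A challenge is resolved (ResolveChallenge) only by submitting a valid QC for the execution of $tx$ before a waiting time $\tau$ elapses. If the challenge is not resolved within $\tau$, anyone may call SettleRollup, which sets the TSC to Frozen (no further state updates or deposits). While Frozen, any client can call SettleWithdraw with its account address, a signature under that account's secret key, a balance $b$ and a Merkle proof that the account has balance $b$ under the account root of the latest recorded state; upon verification the TSC refunds $b$ on the main chain to the client. *)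

(* Defs.v *)
From mathcomp Require Import all_boot.
From Stdlib Require List.
Set Implicit Arguments. Unset Strict Implicit. Unset Printing Implicit Defensive.

(* Basic data: addresses (= public keys), hashes, signatures, secret keys,
   transactions are all encoded as natural numbers. *)
Definition addr := nat.
Definition hash := nat.
Definition sig := nat.
Definition skey := nat.
Definition tx := nat.

(* st_h = < h, H(st_{h-1}), R_h, H(txs_h) > *)
Record digest := Digest {
  d_height : nat; d_prev : hash; d_root : hash; d_txh : hash }.

Inductive msg :=
  | MState of digest          (* a state digest, signed by an enclave *)
  | MExec of tx               (* execution of a (challenged) transaction *)
  | MWithdraw of addr & nat.

Record crypto := Crypto {
  pk_of : skey -> addr;                  (* public key = account address *)
  sign : skey -> msg -> sig;
  verify : addr -> msg -> sig -> bool;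
  Hd : digest -> hash;
  Htxs : seq tx -> hash;
  Hleaf : addr -> nat -> hash;           (* Merkle leaf hash of (address, balance) *)
  Hnode : hash -> hash -> hash }.

Definition sig_correct (C : crypto) : Prop :=
  forall sk m, verify C (pk_of C sk) m (sign C sk m).

Inductive mtree := MLeaf of addr & nat | MNode of mtree & mtree.

Fixpoint mroot (C : crypto) (t : mtree) : hash :=
  match t with
  | MLeaf a b => Hleaf C a b
  | MNode l r => Hnode C (mroot C l) (mroot C r)
  end.

Fixpoint leaves (t : mtree) : seq (addr * nat) :=
  match t with
  | MLeaf a b => [:: (a, b)]
  | MNode l r => leaves l ++ leaves r
  end.

(* A Merkle proof: the list of siblings from the leaf up to the root;
   (true, h) means the sibling h is on the right, (false, h) on the left. *)
Definition mproof := seq (bool * hash).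

Definition mverify (C : crypto) (root : hash) (a : addr) (b : nat) (p : mproof) : bool :=
  foldl (fun acc (s : bool * hash) => if s.1 then Hnode C acc s.2 else Hnode C s.2 acc)
        (Hleaf C a b) p == root.

(* Protocol parameters: n sequencers with registered enclave keys, the
   fault bound f (QC size f+1) and the challenge waiting time tau. *)
Record params := Params { n : nat; f : nat; reg : seq addr; tau : nat }.

(* A quorum certificate: (sequencer index, signature) pairs. *)
Definition qc := seq (nat * sig).

Definition valid_qc (C : crypto) (P : params) (m : msg) (q : qc) : bool :=
  [&& uniq (map fst q), f P < size q &
      all (fun e : nat * sig => (e.1 < n P) && verify C (nth 0 (reg P) e.1) m e.2) q].

Record tsc := TSC {
  st_frozen : bool;                        (* false = Active, true = Frozen *)
  st_latest : digest;
  st_past : seq digest;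
  st_challenges : seq (tx * nat * bool);   (* (tx, start time, resolved?) *)
  st_executed : seq tx;
  st_refunds : seq (addr * nat) }.

(* Calls to the TSC (collateral of challenges is not modelled). *)
Inductive call :=
  | UpdateState of digest & seq tx & qc
  | StartChallenge of tx
  | ResolveChallenge of tx & qc
  | SettleRollup
  | SettleWithdraw of addr & sig & nat & mproof.

Definition step (C : crypto) (P : params) (now : nat) (S : tsc) (c : call) : tsc :=
  match c with
  | UpdateState d txs q =>
      if [&& ~~ st_frozen S, valid_qc C P (MState d) q,
             d_height d == (d_height (st_latest S)).+1,
             d_prev d == Hd C (st_latest S) & d_txh d == Htxs C txs]
      then TSC (st_frozen S) d (st_latest S :: st_past S) (st_challenges S)
               (txs ++ st_executed S) (st_refunds S)
      else S
  | StartChallenge x =>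
      if ~~ st_frozen S
      then TSC (st_frozen S) (st_latest S) (st_past S) ((x, now, false) :: st_challenges S)
               (st_executed S) (st_refunds S)
      else S
  | ResolveChallenge x q =>
      if [&& ~~ st_frozen S,
             has (fun c : tx * nat * bool => [&& c.1.1 == x, ~~ c.2 & now < c.1.2 + tau P])
                 (st_challenges S)
           & valid_qc C P (MExec x) q]
      then TSC (st_frozen S) (st_latest S) (st_past S)
               (map (fun c : tx * nat * bool =>
                       if (c.1.1 == x) && (now < c.1.2 + tau P) then (c.1, true) else c)
                    (st_challenges S))
               (x :: st_executed S) (st_refunds S)
      else S
  | SettleRollup =>
      if ~~ st_frozen S &&
         has (fun c : tx * nat * bool => ~~ c.2 && (c.1.2 + tau P <= now)) (st_challenges S)
      then TSC true (st_latest S) (st_past S) (st_challenges S) (st_executed S) (st_refunds S)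
      else S
  | SettleWithdraw a s b p =>
      if [&& st_frozen S, verify C a (MWithdraw a b) s & mverify C (d_root (st_latest S)) a b p]
      then TSC (st_frozen S) (st_latest S) (st_past S) (st_challenges S) (st_executed S)
               ((a, b) :: st_refunds S)
      else S
  end.

Definition init_tsc (g : digest) : tsc := TSC false g [::] [::] [::] [::].

(* The main chain: block t (timestamp t) contains the list of TSC calls,
   processed in order.  state_at t = TSC state before block t. *)
Fixpoint state_at (C : crypto) (P : params) (g : digest) (blocks : nat -> seq call)
    (t : nat) : tsc :=
  match t with
  | 0 => init_tsc g
  | t'.+1 => foldl (step C P t') (state_at C P g blocks t') (blocks t')
  end.

(* Every account holder of the latest recorded state can redeem its balance:
   with the Merkle proof (supplied by the DA providers from the stored tree
   da (st_latest S)) and its own signature, SettleWithdraw refunds b. *)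
Definition redeemable (C : crypto) (P : params) (da : digest -> mtree) (S : tsc) : Prop :=
  forall (sk : skey) (b : nat), (pk_of C sk, b) \in leaves (da (st_latest S)) ->
    exists p : mproof, forall now : nat,
      st_refunds (step C P now S
        (SettleWithdraw (pk_of C sk) (sign C sk (MWithdraw (pk_of C sk) b)) b p))
      = (pk_of C sk, b) :: st_refunds S.

Definition in_block (c : call) (b : seq call) : Prop := List.In c b.

(* Main.v *)
Require Import Defs.
From Stdlib Require Import Classical.
From mathcomp Require Import all_boot.

Section Aux.
Variables (C : crypto) (P : params).

Lemma foldl_pres (Q : tsc -> Prop) :
  (forall now S c, Q S -> Q (step C P now S c)) ->
  forall now bl S, Q S -> Q (foldl (step C P now) S bl).
Proof. move=> H now; elim=> [|c bl IH] S QS //=; exact/IH/H. Qed.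

Lemma state_pres (Q : tsc -> Prop) g blocks :
  (forall now S c, Q S -> Q (step C P now S c)) ->
  forall t1 t2, t1 <= t2 -> Q (state_at C P g blocks t1) -> Q (state_at C P g blocks t2).
Proof.
move=> H t1; elim=> [|t2 IH] le Q1.
  by move: le; rewrite leqn0 => /eqP Ht; subst t1.
move: le; rewrite leq_eqVlt => /orP [/eqP <- //|lt].
by rewrite /=; apply: foldl_pres => //; apply: IH.
Qed.

Lemma foldl_in (I Q : tsc -> Prop) now c :
  (forall S c', I S -> I (step C P now S c')) ->
  (forall S c', Q S -> Q (step C P now S c')) ->
  (forall S, I S -> Q (step C P now S c)) ->
  forall bl S, I S -> List.In c bl -> Q (foldl (step C P now) S bl).
Proof.
move=> HI HQ Hc; elim=> [|c' bl IH] S IS //= [Hc'|Hin].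
  subst c'; have := Hc _ IS; clear IH; elim: bl (step C P now S c) => [|c2 bl2 IH2] S2 //= HS2.
  by apply: IH2; apply: HQ.
by apply: IH => //; apply: HI.
Qed.

Lemma frozen_pres now S c : st_frozen S -> st_frozen (step C P now S c).
Proof.
move=> H; case: c => /=.
- move=> d txs q; by case: ifP.
- move=> y; by case: ifP.
- move=> y q; by case: ifP.
- by case: ifP.
- move=> a s b p; by case: ifP.
Qed.

Lemma exec_pres x now S c : x \in st_executed S -> x \in st_executed (step C P now S c).
Proof.
move=> H; case: c => /=.
- move=> d txs q; case: ifP => //= _; by rewrite mem_cat H orbT.
- move=> y; by case: ifP.
- move=> y q; case: ifP => //= _; by rewrite inE H orbT.
- by case: ifP.
- move=> a s b p; by case: ifP.
Qed.

Definition Inv x tc S := [|| st_frozen S, x \in st_executed S |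
   (x, tc, false) \in st_challenges S].

Lemma inv_pres x tc now S c : Inv x tc S -> Inv x tc (step C P now S c).
Proof.
rewrite /Inv => /or3P [H|H|H].
- by rewrite frozen_pres.
- by rewrite exec_pres ?orbT.
case: c => [d txs q|y|y q||a s b p] /=; case: ifP => Hc /=;
  rewrite ?in_cons ?H ?orbT //.
case: (eqVneq x y) => [->|ne]; first by rewrite orbT.
apply/orP; right; apply/orP; right.
apply/mapP; exists (x, tc, false) => //=.
by rewrite (negbTE ne).
Qed.

Lemma merkle_proof {a b t} : (a, b) \in leaves t ->
  exists p : mproof, foldl (fun acc (s : bool * hash) =>
      if s.1 then Hnode C acc s.2 else Hnode C s.2 acc) (Hleaf C a b) p = mroot C t.
Proof.
elim: t => [a' b'|l IHl r IHr] /=.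
  by rewrite inE => /eqP [-> ->]; exists [::].
rewrite mem_cat => /orP [/IHl [p Hp]|/IHr [p Hp]].
  by exists (rcons p (true, mroot C r)); rewrite -cats1 foldl_cat Hp.
by exists (rcons p (false, mroot C l)); rewrite -cats1 foldl_cat Hp.
Qed.

End Aux.

Theorem theorem2 (C : crypto) (P : params) (g : digest) (da : digest -> mtree)
    (blocks : nat -> seq call) (x : tx) (tc : nat) :
  sig_correct C ->
  size (reg P) = n P -> uniq (reg P) -> 0 < tau P ->
  (* data availability: the stored account tree matches the recorded root *)
  (forall t, mroot C (da (st_latest (state_at C P g blocks t)))
             = d_root (st_latest (state_at C P g blocks t))) ->
  (* the client challenges x at time tc if it is not executed yet *)
  (~~ st_frozen (state_at C P g blocks tc) ->
   x \notin st_executed (state_at C P g blocks tc) ->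
   in_block (StartChallenge x) (blocks tc)) ->
  (* after the waiting time, SettleRollup is called if x is still not executed *)
  (~~ st_frozen (state_at C P g blocks (tc + tau P)) ->
   x \notin st_executed (state_at C P g blocks (tc + tau P)) ->
   in_block SettleRollup (blocks (tc + tau P))) ->
  (exists t, x \in st_executed (state_at C P g blocks t)) \/
  (exists t, forall t', t <= t' ->
     st_frozen (state_at C P g blocks t') /\ redeemable C P da (state_at C P g blocks t')).
Proof.
move=> Hsig _ _ Htau Hda Hch Hset.
case: (classic (exists t, x \in st_executed (state_at C P g blocks t))) => [E|NE]; [by left|right].
have NEt : forall t, x \notin st_executed (state_at C P g blocks t).
  by move=> t; apply/negP => H; apply: NE; exists t.
set T := (tc + tau P).+1.
have frT : st_frozen (state_at C P g blocks T).
  have I1 : Inv x tc (state_at C P g blocks tc.+1).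
    case Hf: (st_frozen (state_at C P g blocks tc)).
      by rewrite /Inv (@state_pres C P (fun S => st_frozen S) g blocks (@frozen_pres C P) _ _
          (leqnSn tc) Hf).
    rewrite /=; apply: (@foldl_in C P (fun _ => True) (Inv x tc) tc (StartChallenge x)) => //.
    - by move=> S c' H; apply: inv_pres.
    - move=> S _ /=; case: ifP => /= Hf'; first by rewrite /Inv inE eqxx !orbT.
      by move/negbFE: Hf' => Hf'; rewrite /Inv Hf'.
    - by apply: Hch; rewrite ?Hf ?NEt.
  have I2 : Inv x tc (state_at C P g blocks (tc + tau P)).
    apply: (@state_pres C P (Inv x tc) g blocks (@inv_pres C P x tc) _ _) I1.
    by rewrite addnC -add1n leq_add2r.
  case Hf: (st_frozen (state_at C P g blocks (tc + tau P))).
    exact: (@state_pres C P (fun S => st_frozen S) g blocks (@frozen_pres C P) _ _ (leqnSn _) Hf).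
  have : st_frozen (state_at C P g blocks T) || (x \in st_executed (state_at C P g blocks T)).
    rewrite /T /=.
    apply: (@foldl_in C P (Inv x tc) (fun S => st_frozen S || (x \in st_executed S))
              (tc + tau P) SettleRollup) => //.
    - by move=> S c' H; apply: inv_pres.
    - move=> S c' /orP [H|H]; apply/orP; [left; exact: frozen_pres|right; exact: exec_pres].
    - move=> S /or3P [H|H|H] /=.
      + by case: ifP => _ //=; rewrite H.
      + by case: ifP => _ //=; rewrite H orbT.
      + case: ifP => //= /negbT; rewrite negb_and => /orP [/negPn ->//|].
        move/hasPn => /(_ _ H) /=; by rewrite leqnn.
    - by apply: Hset; rewrite ?Hf ?NEt.
  by rewrite (negbTE (NEt T)) orbF.
exists T => t' le.
have Hf := @state_pres C P (fun S => st_frozen S) g blocks (@frozen_pres C P) _ _ le frT.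
split=> //.
move=> sk b Hin; have [p Hp] := @merkle_proof C _ _ _ Hin.
exists p => now /=.
by rewrite Hf Hsig /mverify Hp Hda eqxx.
Qed.
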